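(* Let $X\times G\to X$ be a continuous right action of a locally compact Hausdorff group on a Hausdorff space, and let $F\subseteq X$ be a closed subset such that the action is $F$-proper. Then $FG\subseteq X$ is closed.
   Context: For $A,B\subseteq X$ set $\langle A:B\rangle:=\{g\in G: Bg\cap A\neq\emptyset\}$ and write $A\perp B$ if it is relatively compact in $G$. For closed $F$, the action is $F$-proper if for every $x\in X$ there are neighborhoods $V_x\ni x$ and $V_F\supseteq F$ with $V_F\perp V_x$. *)

(* Defs.v *)
From mathcomp Require Import all_boot all_order all_algebra.
From mathcomp Require Import all_classical all_reals all_analysis.
Set Implicit Arguments. Unset Strict Implicit. Unset Printing Implicit Defensive.
Local Open Scope classical_set_scope.

Definition topological_group (G : topologicalType)
  (mul : G -> G -> G) (inv : G -> G) (one : G) : Prop :=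
  (forall a b c, mul a (mul b c) = mul (mul a b) c) /\
  (forall a, mul one a = a) /\ (forall a, mul a one = a) /\
  (forall a, mul (inv a) a = one) /\ (forall a, mul a (inv a) = one) /\
  continuous (fun p : G * G => mul p.1 p.2) /\ continuous inv.

Definition continuous_right_action (X G : topologicalType)
  (mul : G -> G -> G) (one : G) (act : X -> G -> X) : Prop :=
  [/\ (forall x, act x one = x),
      (forall x g h, act (act x g) h = act x (mul g h)) &
      continuous (fun p : X * G => act p.1 p.2)].

Definition transporter (X G : Type) (act : X -> G -> X) (A B : set X) : set G :=
  [set g | exists2 b, B b & A (act b g)].

Definition perp (X G : topologicalType) (act : X -> G -> X) (A B : set X) : Prop :=
  compact (closure (transporter act A B)).

Definition set_nbhs (X : topologicalType) (F V : set X) : Prop :=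
  exists2 U, open U & F `<=` U /\ U `<=` V.

Definition F_proper (X G : topologicalType) (act : X -> G -> X) (F : set X) : Prop :=
  forall x : X, exists VF, exists Vx,
    [/\ set_nbhs F VF, nbhs x Vx & perp act VF Vx].

Definition orbit_set (X G : Type) (act : X -> G -> X) (F : set X) : set X :=
  [set act f g | f in F & g in [set: G]].

(* Main.v *)
Require Import Defs.
From mathcomp Require Import all_boot all_order all_algebra.
From mathcomp Require Import all_classical all_reals all_analysis.
Local Open Scope classical_set_scope.

Theorem corollary2p11 (G X : topologicalType)
  (mul : G -> G -> G) (inv : G -> G) (one : G) (act : X -> G -> X)
  (F : set X) :
  topological_group mul inv one ->
  locally_compact [set: G] -> hausdorff_space G ->
  hausdorff_space X ->
  continuous_right_action mul one act ->
  closed F -> F_proper act F ->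
  closed (orbit_set act F).
Proof.
move=> [_ [_ [_ [_ [mulV _]]]]] _ _ _ [act1 actM actC] clF Fp y yc.
have [VF [Vx [[U _ [FU UVF]] Vxy cK]]] := Fp y.
pose S (W : set X) : set G := [set h | exists2 x, (W `&` Vx) x & F (act x h)].
pose FF := filter_from (nbhs y) S.
have FFf : Filter FF.
  apply: filter_from_filter; first by exists setT; apply: filterT.
  move=> i j ni nj; exists (i `&` j); first exact: filterI.
  by move=> h [x [[ix jx] vx] Fx]; split; exists x.
have FFp : ProperFilter FF.
  apply: filter_from_proper => W nW.
  have [z [[f Ff [g _ <-]] [Wz Vz]]] := yc _ (filterI nW Vxy).
  exists (inv g); exists (act f g) => //.
  by rewrite actM mulV act1.
have FK : FF (closure (transporter act VF Vx)).
  exists setT; first exact: filterT.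
  move=> h [x [_ vx] Fx]; apply: subset_closure.
  by exists x => //; apply/UVF/FU.
have [h [_ clh]] := cK FF FFp FK.
have Fyh : F (act y h).
  apply: clF => N nN.
  have := actC (y, h) _ nN => /= -[[A B] /= [nA nB] AB].
  have := clh (S A) B (@in_filter_from _ _ (nbhs y) S A nA) nB; case=> h' [[x [Ax Vx'] Fx] Bh'].
  exists (act x h'); split => //.
  exact: (AB (x, h')).
exists (act y h) => //; exists (inv h) => //.
by rewrite actM mulV act1.
Qed.
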